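(* Fix $l\in S^{d-1}$, $L'>R$ and $L=3L'$. Let $w:\mathbb R_+\to\mathbb R^d$ be a continuous path with $w(0)=0$ and $\limsup_{t\to\infty}\frac{l\cdot w(t)}{t}>0$. Then there exists an integer $h\ge1$ such that for all integers $\alpha\ge2$, $$\limsup_{M\to\infty}\frac1{M+1}\sum_{m=0}^M\mathbb 1_{\{h^{(m)}_\alpha(w)\le h\}}\ge\frac13 .$$
   Context: All quantities below are evaluated along the path $w$ (infimum of the empty set is $+\infty$). For $a<b$: open slab $\mathcal S_{(a,b)}=\{x:a<x\cdot l<b\}$, closed slab $\bar{\mathcal S}_{(a,b)}=\{x:a\le x\cdot l\le b\}$. For a set $A$: entrance time $H_A=\inf\{t\ge0:w(t)\in A\}$, exit time $T_A=\inf\{t\ge0:w(t)\notin A\}$; $T_u=\inf\{t\ge0:l\cdot w(t)\ge u\}$; $\theta_t$ denotes the time shift $(\theta_tw)(s)=w(t+s)$. For integer $m\ge0$: $R^{(m)}_1=H_{\bar{\mathcal S}_{(mL+L',mL+2L')}}$, $S^{(m)}_1=T_{\mathcal S_{(mL,(m+1)L)}}\circ\theta_{R^{(m)}_1}+R^{(m)}_1$, and for $k\ge2$, $R^{(m)}_k=R^{(m)}_1\circ\theta_{S^{(m)}_{k-1}}+S^{(m)}_{k-1}$, $S^{(m)}_k=S^{(m)}_1\circ\theta_{S^{(m)}_{k-1}}+S^{(m)}_{k-1}$. For integer $\alpha\ge2$: $k^{(m)}_\alpha=\max\{k\ge1:R^{(m)}_k+1\le S^{(m)}_k<T_{(m+\alpha)L}\}$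 if $T_{(m+\alpha)L}<\infty$ and this set is nonempty, and $k^{(m)}_\alpha=0$ otherwise; $h^{(m)}_\alpha=S^{(m)}_{k^{(m)}_\alpha}-T_{mL}$ if $T_{(m+\alpha)L}<\infty$ (with the convention $S^{(m)}_0=T_{mL}$), and $h^{(m)}_\alpha=\infty$ otherwise. Here $R>0$ is a fixed positive constant. *)

(* Defs.v *)
From HB Require Import structures.
From mathcomp Require Import all_boot all_order all_algebra.
From mathcomp Require Import all_classical all_reals all_analysis.
Set Implicit Arguments. Unset Strict Implicit. Unset Printing Implicit Defensive.
Import Order.TTheory GRing.Theory Num.Theory.
Import numFieldNormedType.Exports.
Local Open Scope classical_set_scope.
Local Open Scope ring_scope.

Section Defs.
Variables (R : realType) (d : nat).
Local Notation vec := 'rV[R]_d.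
Local Notation path := (R -> vec).

Definition dotv (x y : vec) : R := \sum_(i < d) x 0 i * y 0 i.

Definition oslab (l : vec) (a b : R) : set vec := [set x | a < dotv x l < b].
Definition cslab (l : vec) (a b : R) : set vec := [set x | a <= dotv x l <= b].

(* entrance time H_A = inf {t >= 0 : w t \in A} (inf of empty set = +oo) *)
Definition hitT (A : set vec) (w : path) : \bar R :=
  ereal_inf [set t%:E | t in [set t : R | 0 <= t /\ A (w t)]].
Definition exitT (A : set vec) (w : path) : \bar R := hitT (~` A) w.
Definition Tu (l : vec) (u : R) (w : path) : \bar R :=
  ereal_inf [set t%:E | t in [set t : R | 0 <= t /\ u <= dotv l (w t)]].

Definition shift (w : path) (t : R) : path := fun s => w (t + s).

Definition after (T : \bar R) (F : path -> \bar R) (w : path) : \bar R :=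
  match T with
  | EFin r => (F (shift w r) + r%:E)%E
  | _ => +oo%E
  end.

Variables (l : vec) (L L' : R).

Definition R1 (m : nat) (w : path) : \bar R :=
  hitT (cslab l (m%:R * L + L') (m%:R * L + 2 * L')) w.
Definition S1 (m : nat) (w : path) : \bar R :=
  after (R1 m w) (exitT (oslab l (m%:R * L) (m.+1%:R * L))) w.

(* RS m n w = (R^(m)_(n+1), S^(m)_(n+1)) *)
Fixpoint RS (m n : nat) (w : path) : \bar R * \bar R :=
  match n with
  | 0 => (R1 m w, S1 m w)
  | n'.+1 => let s := (RS m n' w).2 in (after s (R1 m) w, after s (S1 m) w)
  end.

(* R^(m)_k and S^(m)_k for k >= 1; S^(m)_0 := T_(mL) *)
Definition Rk (m k : nat) (w : path) : \bar R := (RS m k.-1 w).1.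
Definition Sk (m k : nat) (w : path) : \bar R :=
  if k is 0 then Tu l (m%:R * L) w else (RS m k.-1 w).2.

Definition kset (m alpha : nat) (w : path) : set nat :=
  [set k | (1 <= k)%N /\ (Rk m k w + 1%:E <= Sk m k w)%E /\
           (Sk m k w < Tu l ((m + alpha)%:R * L) w)%E].

Definition kspec (m alpha : nat) (w : path) (k : nat) : Prop :=
  if ((Tu l ((m + alpha)%:R * L) w) < +oo)%E && `[< kset m alpha w !=set0 >]
  then kset m alpha w k /\ (forall j, kset m alpha w j -> (j <= k)%N)
  else k = 0%N.

(* k^(m)_alpha: the (unique) k satisfying kspec (the maximum exists) *)
Definition kalpha (m alpha : nat) (w : path) : nat := xget 0%N (kspec m alpha w).

Definition halpha (m alpha : nat) (w : path) : \bar R :=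
  if ((Tu l ((m + alpha)%:R * L) w) < +oo)%E
  then (Sk m (kalpha m alpha w) w - Tu l (m%:R * L) w)%E
  else +oo%E.

End Defs.

(* Main.v *)
Require Import Defs.
From HB Require Import structures.
From mathcomp Require Import all_boot all_order all_algebra.
From mathcomp Require Import all_classical all_reals all_analysis.
From mathcomp Require Import zify ring lra.
Import Order.TTheory GRing.Theory Num.Theory.
Import numFieldNormedType.Exports.
Local Open Scope classical_set_scope.
Local Open Scope ring_scope.


Section H.
Variables (R : realType) (d : nat).

Lemma hitT_ge0 (A : set 'rV[R]_d) w0 : (0 <= hitT A w0)%E.
Proof. by apply: le_ereal_inf_tmp => _ [t [t0 _] <-]; rewrite lee_fin. Qed.

Lemma exitT_ge0 (A : set 'rV[R]_d) w0 : (0 <= exitT A w0)%E.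
Proof. exact: hitT_ge0. Qed.

Lemma Tu_ge0 l u (w0 : R -> 'rV[R]_d) : (0 <= Tu l u w0)%E.
Proof. by apply: le_ereal_inf_tmp => _ [t [t0 _] <-]; rewrite lee_fin. Qed.

Lemma Tu_le l u (w0 : R -> 'rV[R]_d) t : 0 <= t -> u <= dotv l (w0 t) -> (Tu l u w0 <= t%:E)%E.
Proof. by move=> t0 ut; apply: ereal_inf_lbound; exists t. Qed.

Lemma Tu_mono l u v (w0 : R -> 'rV[R]_d) : u <= v -> (Tu l u w0 <= Tu l v w0)%E.
Proof.
move=> uv; apply: ereal_inf_le_tmp => _ [t [t0 h] <-]; exists t => //; split => //.
exact: le_trans h.
Qed.

Lemma after_ge T F (w0 : R -> 'rV[R]_d) : (forall w1, (0 <= F w1)%E) -> (T <= after T F w0)%E.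
Proof.
move=> F0; case: T => [r| |] /=.
- by rewrite leeDr.
- by [].
- by rewrite leNye.
Qed.

Lemma after_in (A : set 'rV[R]_d) w0 r t : r <= t ->
  (t%:E < after r%:E (hitT A) w0)%E -> ~ A (w0 t).
Proof.
move=> rt /= lt HA.
have : (hitT A (Defs.shift w0 r) <= (t - r)%:E)%E.
  apply: ereal_inf_lbound; exists (t - r) => //; split; first by rewrite subr_ge0.
  by rewrite /Defs.shift; have -> : r + (t - r) = t by ring.
move: lt (hitT_ge0 A (Defs.shift w0 r)); case: (hitT A (Defs.shift w0 r)) => [q| |] //=.
rewrite -EFinD !lte_fin !lee_fin; lra.
Qed.

End H.


Section H2.
Variables (R : realType) (d : nat) (l : 'rV[R]_d) (L L' : R).

Lemma RS_S m n w0 : (RS l L L' m n w0).2 =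
  after (RS l L L' m n w0).1 (exitT (oslab l (m%:R*L) (m.+1%:R*L))) w0.
Proof.
case: n => [|n] //=.
case: (RS l L L' m n w0).2 => [r| |] //=.
rewrite /S1; case: (R1 l L L' m (Defs.shift w0 r)) => [q| |] //=.
have -> : Defs.shift (Defs.shift w0 r) q = Defs.shift w0 (q + r).
  by apply: funext => s; rewrite /Defs.shift; congr w0; ring.
by rewrite EFinD addeA.
Qed.

Lemma RS_R0 m w0 : (0 <= (RS l L L' m 0 w0).1)%E.
Proof. exact: hitT_ge0. Qed.

Lemma RS_RS m n w0 : ((RS l L L' m n w0).1 <= (RS l L L' m n w0).2)%E.
Proof. by rewrite RS_S; apply: after_ge => w1; exact: exitT_ge0. Qed.

Lemma RS_next m n w0 : ((RS l L L' m n w0).2 <= (RS l L L' m n.+1 w0).1)%E.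
Proof. by rewrite /=; apply: after_ge => w1; exact: hitT_ge0. Qed.

Lemma RS_mono m j n w0 : (j < n)%N ->
  ((RS l L L' m j w0).2 <= (RS l L L' m n w0).1)%E.
Proof.
elim: n => [//|n IH]; rewrite ltnS leq_eqVlt => /orP [/eqP -> | jn].
  exact: RS_next.
apply: le_trans (IH jn) _; apply: le_trans (RS_RS m n w0) _; exact: RS_next.
Qed.

Lemma RS_ge0 m n w0 : (0 <= (RS l L L' m n w0).1)%E.
Proof.
elim: n => [|n IH]; first exact: RS_R0.
apply: le_trans IH _; apply: le_trans (RS_RS m n w0) _; exact: RS_next.
Qed.

Lemma RS_in m n w0 t : ((RS l L L' m n w0).1 <= t%:E)%E ->
  (t%:E < (RS l L L' m n w0).2)%E -> oslab l (m%:R*L) (m.+1%:R*L) (w0 t).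
Proof.
rewrite RS_S; move: (RS_ge0 m n w0).
case: (RS l L L' m n w0).1 => [r| |] //= r0 rt tlt.
rewrite lee_fin in rt.
have := @after_in R d _ w0 r t rt tlt.
by move=> H; apply: contrapT.
Qed.

End H2.


Section H3.
Variables (R : realType) (d : nat) (l : 'rV[R]_d) (L L' : R).

Lemma halpha_bad m a w0 (h : R) : 0 <= h ->
  (Tu l ((m + a)%:R * L) w0 < +oo)%E -> Tu l (m%:R * L) w0 \is a fin_num ->
  ~ (halpha l L L' m a w0 <= h%:E)%E ->
  kset l L L' m a w0 (kalpha l L L' m a w0) /\
  (h%:E < Sk l L L' m (kalpha l L L' m a w0) w0 - Tu l (m%:R * L) w0)%E.
Proof.
move=> h0 Tlt Tfin; rewrite /halpha Tlt => nh.
have Hk : kspec l L L' m a w0 (kalpha l L L' m a w0) \/ kalpha l L L' m a w0 = 0%N.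
  by rewrite /kalpha; case: xgetP => [k _ Hk|_]; [left|right].
move: Hk nh; move: (kalpha l L L' m a w0) => k Hk nh.
have k0 : k = 0%N -> False.
  by move=> e; apply: nh; rewrite e /= subee // lee_fin.
case: Hk => [|/k0 //]; rewrite /kspec Tlt /=; case: asboolP => [ne | _] /=.
  by case=> Hks _; split => //; rewrite ltNge; apply/negP.
by move/k0.
Qed.

End H3.


Section H4.
Variables (R : realType).

Lemma limsup_pos (V : R -> R) :
  (0 < limf_esup (fun t : R => (V t / t)%:E) (pinfty_nbhs R))%E ->
  exists c, 0 < c /\ forall T, exists t, T < t /\ 0 < t /\ c * t <= V t.
Proof.
move=> H.
have [c [c0 cH]] : exists c, 0 < c /\
    (c%:E < limf_esup (fun t : R => (V t / t)%:E) (pinfty_nbhs R))%E.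
  move: H; case: (limf_esup _ _) => [r| |] //= H.
    by exists (r / 2); rewrite lte_fin in H; rewrite lte_fin; split; lra.
  by exists 1; split => //; exact: ltry.
exists c; split => // T.
set T' := Num.max T 0.
have : (limf_esup (fun t : R => (V t / t)%:E) (pinfty_nbhs R) <=
        ereal_sup ((fun t : R => (V t / t)%:E) @` [set x : R | (T' < x)%R]))%E.
  apply: ereal_inf_lbound; exists [set x : R | (T' < x)%R] => //.
  by exists T'; split => //; exact: num_real.
move/(lt_le_trans cH)/ereal_sup_gt => [_ [t /= Tt <-]].
rewrite lte_fin => ct.
have t0 : 0 < t by apply: le_lt_trans Tt; rewrite /T' le_max lexx orbT.
exists t; split; first by apply: le_lt_trans Tt; rewrite /T' le_max lexx.
split => //.
by apply: ltW; rewrite -ltr_pdivlMr.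
Qed.

End H4.


Section H5.
Variables (R : realType) (d : nat) (l : 'rV[R]_d) (L L' : R) (w : R -> 'rV[R]_d)
  (tau : nat -> R).
Hypotheses (L0 : 0 < L) (tauE : forall k, Tu l (k%:R * L) w = (tau k)%:E).

Definition kk m a := kalpha l L L' m a w.
Definition rr m a := fine (Rk l L L' m (kk m a) w).
Definition ss m a := fine (Sk l L L' m (kk m a) w).

Lemma exc_props m a (hh : nat) : ~ (halpha l L L' m a w <= hh%:R%:E)%E ->
  (1 <= kk m a)%N /\ (RS l L L' m (kk m a).-1 w).1 = (rr m a)%:E /\
      (RS l L L' m (kk m a).-1 w).2 = (ss m a)%:E /\ 0 <= rr m a /\
      rr m a + 1 <= ss m a /\ ss m a < tau (m + a) /\ tau m + hh%:R < ss m a.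
Proof.
move=> nh.
have Tlt : (Tu l ((m + a)%:R * L) w < +oo)%E by rewrite tauE; exact: ltry.
have Tfin : Tu l (m%:R * L) w \is a fin_num by rewrite tauE.
have [[k1 [Hle Hlt]] Hh] := @halpha_bad R d l L L' m a w hh%:R (ler0n R hh) Tlt Tfin nh.
rewrite /rr /ss /kk.
move: k1 Hle Hlt Hh; case: (kalpha l L L' m a w) => [//|k] _ /=.
rewrite /Rk /Sk /= tauE tauE.
move: (@RS_ge0 R d l L L' m k w).
case: (RS l L L' m k w).1 => [r| |] //; case: (RS l L L' m k w).2 => [s| |] //=.
rewrite -!EFinD !lee_fin !lte_fin => r0 h1 h2 h3.
by do !split => //; lra.
Qed.

Lemma oslab_unique m m' x : oslab l (m%:R*L) (m.+1%:R*L) x ->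
  oslab l (m'%:R*L) (m'.+1%:R*L) x -> m = m'.
Proof.
rewrite /oslab /= => /andP[a b] /andP[c e].
apply/eqP; rewrite eqn_leq; apply/andP; split.
  have : m%:R * L < m'.+1%:R * L by apply: lt_trans e.
  by rewrite ltr_pM2r // ltr_nat ltnS.
have : m'%:R * L < m.+1%:R * L by apply: lt_trans b.
by rewrite ltr_pM2r // ltr_nat ltnS.
Qed.

Definition zz m a := Num.ceil (rr m a).

Lemma zz_props m a (hh : nat) : ~ (halpha l L L' m a w <= hh%:R%:E)%E ->
  [/\ 0 <= zz m a, rr m a <= (zz m a)%:~R, (zz m a)%:~R < ss m a &
      oslab l (m%:R*L) (m.+1%:R*L) (w (zz m a)%:~R)].
Proof.
move=> nh; have [k1 [e1 [e2 [r0 [rs [st tm]]]]]] := exc_props _ _ _ nh.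
have [lo hi] : ((zz m a - 1)%:~R < rr m a) /\ (rr m a <= (zz m a)%:~R).
  by apply/andP; exact: ceil_itv.
have zlt : (zz m a)%:~R < ss m a.
  by move: lo; rewrite intrD /= => lo; lra.
split => //.
  by rewrite /zz ceil_ge0; lra.
by apply: (@RS_in R d l L L' m ((kk m a).-1)); rewrite ?e1 ?e2 ?lee_fin ?lte_fin.
Qed.

Lemma exc_inj m m' a a' (hh hh' : nat) :
  ~ (halpha l L L' m a w <= hh%:R%:E)%E ->
  ~ (halpha l L L' m' a' w <= hh'%:R%:E)%E ->
  zz m a = zz m' a' -> m = m' /\ kk m a = kk m' a'.
Proof.
move=> n1 n2 ez.
have [z0 rz zs Oz] := zz_props _ _ _ n1.
have [z0' rz' zs' Oz'] := zz_props _ _ _ n2.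
have emm : m = m' by apply: oslab_unique Oz _; rewrite ez.
subst m'; split => //.
have [k1 [e1 [e2 [r0 [rs [st tm]]]]]] := exc_props _ _ _ n1.
have [k1' [e1' [e2' [r0' [rs' [st' tm']]]]]] := exc_props _ _ _ n2.
case: (ltngtP (kk m a) (kk m a')) => // hk; exfalso.
- have := @RS_mono R d l L L' m ((kk m a).-1) ((kk m a').-1) w.
  rewrite e2 e1' lee_fin; move: hk k1 k1'.
  case: (kk m a) => // k; case: (kk m a') => // k' /= hk _ _ /(_ hk) sr.
  by move: zs rz'; rewrite ez; lra.
- have := @RS_mono R d l L L' m ((kk m a').-1) ((kk m a).-1) w.
  rewrite e2' e1 lee_fin; move: hk k1 k1'.
  case: (kk m a) => // k; case: (kk m a') => // k' /= hk _ _ /(_ hk) sr.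
  by move: zs' rz; rewrite ez; lra.
Qed.

End H5.


Lemma tele (R : realType) (f : nat -> R) a X :
  \sum_(0 <= m < X) (f (m + a)%N - f m) = \sum_(0 <= j < a) (f (X + j)%N - f j).
Proof.
elim: X => [|X IH].
  by rewrite big_geq // big1 // => j _; rewrite add0n subrr.
rewrite big_nat_recr //= IH.
have -> : \sum_(0 <= j < a) (f (X.+1 + j)%N - f j) =
  \sum_(0 <= j < a) (f (X + j)%N - f j) + \sum_(0 <= j < a) (f (X + j.+1)%N - f (X + j)%N).
  by rewrite -big_split /=; apply: eq_bigr => j _; rewrite addnS addSn; ring.
by rewrite (telescope_sumr (fun j => f (X + j)%N)) // addn0.
Qed.

Lemma inj_count (T : finType) (A : pred T) (f : T -> nat) B :
  {in A &, injective f} -> (forall x, x \in A -> (f x < B)%N) -> (#|A| <= B)%N.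
Proof.
move=> finj fB.
have := @uniq_leq_size _ (map f (enum A)) (iota 0 B).
rewrite size_map size_iota -cardE; apply.
  by rewrite map_inj_in_uniq ?enum_uniq // => x y; rewrite !mem_enum; exact: finj.
move=> n /mapP [x]; rewrite mem_enum => xA ->.
by rewrite mem_iota add0n fB.
Qed.

Fixpoint hs (f : nat -> nat) (Q : nat) (i : nat) : nat :=
  if i is i'.+1 then (hs f Q i' + f (hs f Q i') * Q)%N else 1%N.

Lemma hs_mono f Q i j : (i <= j)%N -> (hs f Q i <= hs f Q j)%N.
Proof.
elim: j => [|j IH]; first by rewrite leqn0 => /eqP ->.
rewrite leq_eqVlt => /orP [/eqP -> //| ]; rewrite ltnS => /IH h.
by apply: leq_trans h _; rewrite /= leq_addr.
Qed.

Lemma hs_ge1 f Q i : (1 <= hs f Q i)%N.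
Proof. by have := hs_mono f Q 0 i (leq0n i). Qed.

Lemma ar1 a b n : (4 * a + b + 2 <= n)%N ->
  [/\ (a <= n)%N, n = ((n - a) + a)%N, (3 * a + 2 <= (n - a).+1)%N & (b <= n - a)%N].
Proof. move=> h; split; lia. Qed.

Lemma ar2 x j a A n : (j < a)%N -> (a <= A)%N -> n = ((x - 1) + A)%N -> (0 < x)%N -> (x + j <= n)%N.
Proof. lia. Qed.

Lemma ar3 M j a A n : (j < a)%N -> (a <= A)%N -> n = (M + A)%N -> (M.+1 + j <= n)%N.
Proof. lia. Qed.

Lemma ar4 m M a A n : (m < M.+1)%N -> (a <= A)%N -> n = (M + A)%N -> (m + a <= n)%N.
Proof. lia. Qed.


Theorem proposition2p1 (R : realType) (d : nat) (Rc : R) (l : 'rV[R]_d)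
    (L' L : R) (w : R -> 'rV[R]_d) :
  0 < Rc ->
  dotv l l = 1 ->
  Rc < L' -> L = 3 * L' ->
  {within [set t : R | 0 <= t], continuous w} ->
  w 0 = 0 ->
  (0 < limf_esup (fun t : R => ((dotv l (w t)) / t)%:E) (pinfty_nbhs R))%E ->
  exists h : nat, (1 <= h)%N /\
    forall alpha : nat, (2 <= alpha)%N ->
      ((1 / 3 : R)%:E <=
       limn_esup (fun M : nat =>
         ((M.+1%:R)^-1 *
          (\sum_(0 <= m < M.+1)
             (if (halpha l L L' m alpha w <= h%:R%:E)%E then 1 else 0)))%:E))%E.
Proof.
move=> Rc0 ll RcL LL cont w0 Hlim.
have L0 : 0 < L by rewrite LL; lra.
have [c [c0 Hc]] := @limsup_pos R _ Hlim.
have Tbnd : forall k : nat, exists t, 0 <= t /\ (Tu l (k%:R * L) w <= t%:E)%E.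
  move=> k; have [t [kt [t0 ct]]] := Hc (k%:R * L / c).
  exists t; split; first exact: ltW.
  apply: Tu_le; first exact: ltW.
  have : k%:R * L < t * c by rewrite -ltr_pdivrMr.
  lra.
pose tau k := fine (Tu l (k%:R * L) w).
have tauE : forall k, Tu l (k%:R * L) w = (tau k)%:E.
  move=> k; have [t [t0 le]] := Tbnd k; rewrite /tau.
  by move: (@Tu_ge0 R d l (k%:R * L) w) le; case: (Tu l (k%:R * L) w).
have tau0 : forall k, 0 <= tau k.
  by move=> k; have := @Tu_ge0 R d l (k%:R * L) w; rewrite tauE lee_fin.
have taumono : forall k k', (k <= k')%N -> tau k <= tau k'.
  move=> k k' kk'; rewrite -lee_fin -!tauE; apply: Tu_mono.
  by rewrite ler_pM2r // ler_nat.
have taule : forall k t, 0 <= t -> k%:R * L <= dotv l (w t) -> tau k <= t.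
  by move=> k t t0 kt; rewrite -lee_fin -tauE; apply: Tu_le.
apply: contrapT => Hn.
have Hh : forall h : nat, exists p : nat * nat, (1 <= h)%N -> (2 <= p.1)%N /\
    forall M, (p.2 <= M)%N ->
    \sum_(0 <= m < M.+1)
      (if (halpha l L L' m p.1 w <= h%:R%:E)%E then 1 else 0 : R) < M.+1%:R / 3.
  move=> h; case: (leqP 1 h) => h1; last by exists (0,0)%N.
  pose u (alpha : nat) := fun M : nat =>
         (((M.+1%:R)^-1 * (\sum_(0 <= m < M.+1)
          (if (halpha l L L' m alpha w <= h%:R%:E)%E then 1 else 0))) : R)%:E.
  have : ~ (forall alpha, (2 <= alpha)%N -> ((1/3 : R)%:E <= limn_esup (u alpha))%E).
    by move=> Hall; apply: Hn; exists h; split.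
  move/existsNP => [alpha /not_implyP [a2 /negP nle]].
  rewrite -ltNge in nle.
  have [_ [Vs HV <-] ltV] := ereal_inf_lt nle.
  case: HV => N _ HN.
  exists (alpha, N) => _; split => // M NM /=.
  have : (u alpha M <= ereal_sup (u alpha @` Vs))%E.
    by apply: ereal_sup_ubound; exists M => //; apply: HN.
  move/le_lt_trans/(_ ltV); rewrite /u lte_fin mulrC ltr_pdivrMr ?ltr0n //.
  lra.
have [F HF] := choice Hh.
pose alpha h := (F h).1. pose M0 h := (F h).2.
pose Q := (Num.trunc (6 * L / c)).+1.
have hQ : 6 * L < c * Q%:R.
  have := truncnS_gt (6 * L / c); rewrite ltr_pdivrMr // /Q => h; lra.
pose K := (Num.trunc (4 * L / c)).+2.
have hK : 4 * L + c < c * K%:R.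
  have := truncnS_gt (4 * L / c); rewrite ltr_pdivrMr // => h.
  have -> : K%:R = (Num.trunc (4 * L / c)).+1%:R + 1 :> R by rewrite /K -addn1 natrD.
  lra.
pose hsq := hs alpha Q. pose al i := alpha (hsq i).
pose A := (\sum_(i < K) al i)%N. pose M0m := (\sum_(i < K) M0 (hsq i))%N.
have alA : forall i : 'I_K, (al i <= A)%N by move=> i; rewrite /A (bigD1 i) //= leq_addr.
have M0A : forall i : 'I_K, (M0 (hsq i) <= M0m)%N by move=> i; rewrite /M0m (bigD1 i) //= leq_addr.
have HFi : forall i, (2 <= al i)%N /\ forall M, (M0 (hsq i) <= M)%N ->
    \sum_(0 <= m < M.+1)
      (if (halpha l L L' m (al i) w <= (hsq i)%:R%:E)%E then 1 else 0 : R) < M.+1%:R / 3.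
  by move=> i; apply: (HF (hsq i)); exact: hs_ge1.
pose N0 := (4 * A + M0m + 2)%N.
have [t [Tt [t0 ct]]] := Hc (N0.+1%:R * L / c).
pose N := Num.trunc (c * t / L).
have ctL0 : 0 <= c * t / L by apply: divr_ge0; [apply: mulr_ge0; exact: ltW | exact: ltW].
have hN1 : N%:R * L <= c * t.
  by rewrite -ler_pdivlMr // truncn_le.
have hN2 : c * t < N.+1%:R * L.
  by rewrite -ltr_pdivrMr //; exact: truncnS_gt.
have N0N : (N0 <= N)%N.
  rewrite truncn_ge_nat // ler_pdivlMr //.
  move: Tt; rewrite ltr_pdivrMr // -addn1 natrD => h; lra.
have tauN : tau N <= t by apply: taule; [exact: ltW | lra].
pose M := (N - A)%N. pose X := M.+1.
have [AN NMA XA M0M] := @ar1 A M0m N N0N.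
rewrite -/M in NMA XA M0M. rewrite -/X in XA.
have NX : N.+1%:R = X%:R + A%:R :> R by rewrite NMA /X -natrD addSn.
pose P (i m : nat) : bool := ~~ (halpha l L L' m (al i) w <= (hsq i)%:R%:E)%E &&
   ~~ ((hsq i.+1)%:R < tau (m + al i)%N - tau m).
have perI : forall i : 'I_K, X%:R / 2 - A%:R / 6 <=
    \sum_(0 <= m < X) (if P i m then 1 else 0 : R).
  move=> i; have [a2 Hs] := HFi i.
  have Hg := Hs M (leq_trans (M0A i) M0M).
  rewrite -/X in Hg.
  pose s (m : nat) : R := if (hsq i.+1)%:R < tau (m + al i)%N - tau m then 1 else 0.
  have s0 : forall m, 0 <= s m by move=> m; rewrite /s; case: ifP.
  have Hs1 : \sum_(0 <= m < X) (hsq i.+1)%:R * s m <=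
             \sum_(0 <= m < X) (tau (m + al i)%N - tau m).
    apply: ler_sum => m _; rewrite /s; case: ifP => h; first by rewrite mulr1 ltW.
    by rewrite mulr0 subr_ge0; apply: taumono; rewrite leq_addr.
  have Hs2 : \sum_(0 <= m < X) (tau (m + al i)%N - tau m) <= (al i)%:R * t.
    rewrite tele; apply: (@le_trans _ _ (\sum_(0 <= j < al i) t)); last first.
      by rewrite sumr_const_nat subn0 mulr_natl.
    apply: ler_sum_nat => j /andP[_ ja].
    have := tau0 j; have : tau (X + j)%N <= t.
      apply: le_trans tauN; apply: taumono; exact: (@ar3 M j (al i) A N ja (alA i) NMA).
    lra.
  pose Ss := \sum_(0 <= m < X) s m.
  have HsS : (al i * Q <= hsq i.+1)%N by rewrite /hsq /= leq_addl.
  have H1 : (hsq i.+1)%:R * Ss <= (al i)%:R * t.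
    by rewrite /Ss mulr_sumr; exact: le_trans Hs1 Hs2.
  have H2 : (al i)%:R * Q%:R <= (hsq i.+1)%:R :> R by rewrite -natrM ler_nat.
  have Ss0 : 0 <= Ss by apply: sumr_ge0 => m _; exact: s0.
  have a0 : 0 < (al i)%:R :> R by rewrite ltr0n (leq_trans _ a2).
  have H3 : Q%:R * Ss <= t.
    have : (al i)%:R * (Q%:R * Ss) <= (al i)%:R * t.
      apply: le_trans H1; rewrite mulrA; exact: ler_wpM2r.
    by rewrite ler_pM2l.
  have H4 : 6 * L * Ss <= c * t.
    have h1 : c * (Q%:R * Ss) <= c * t by rewrite ler_pM2l.
    have h2 : 6 * L * Ss <= c * Q%:R * Ss by apply: ler_wpM2r => //; exact: ltW.
    lra.
  have H5 : L * (6 * Ss) < L * (X%:R + A%:R).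
    by move: hN2; rewrite NX; lra.
  rewrite ltr_pM2l // in H5.
  have Hpt : forall m, 1 <= (if (halpha l L L' m (al i) w <= (hsq i)%:R%:E)%E then 1 else 0)
       + s m + (if P i m then 1 else 0 : R).
    move=> m; rewrite /s /P.
    case: (halpha l L L' m (al i) w <= (hsq i)%:R%:E)%E;
    case: ((hsq i.+1)%:R < tau (m + al i)%N - tau m); rewrite /=; lra.
  have : X%:R <= \sum_(0 <= m < X)
      (if (halpha l L L' m (al i) w <= (hsq i)%:R%:E)%E then 1 else 0 : R)
       + Ss + \sum_(0 <= m < X) (if P i m then 1 else 0 : R).
    rewrite /Ss -!big_split /=.
    have -> : X%:R = \sum_(0 <= m < X) (1 : R) by rewrite sumr_const_nat subn0.
    by apply: ler_sum => m _; exact: Hpt m.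
  lra.
have Hcard : \sum_(i < K) \sum_(0 <= m < X) (if P i m then 1 else 0 : R) <= t + 1.
  pose f (p : 'I_K * 'I_X) : nat := `|@zz R d l L L' w p.2 (al p.1)|%N.
  pose Aset : pred ('I_K * 'I_X) := fun p => P p.1 p.2.
  have Eq : \sum_(i < K) \sum_(0 <= m < X) (if P i m then 1 else 0 : R) = #|Aset|%:R.
    under eq_bigr => i _ do rewrite big_mkord.
    rewrite pair_big /= -big_mkcond /= -sum1_card natr_sum.
    apply: eq_bigl => p; rewrite /Aset; first [by [] | by rewrite unfold_in | by rewrite inE | by rewrite -topredE].
  have Hc2 : (#|Aset| <= (Num.trunc t).+1)%N.
    apply: (@inj_count _ Aset f).
    - move=> [i m] [i' m']; rewrite /Aset !unfold_in /= => Pim Pim' ef.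
      have /andP[b1 s1] := Pim; have /andP[b1' s1'] := Pim'.
      move/negP in b1; move/negP in b1'.
      have [z0 _ _ _] := @zz_props R d l L L' w tau tauE m (al i) (hsq i) b1.
      have [z0' _ _ _] := @zz_props R d l L L' w tau tauE m' (al i') (hsq i') b1'.
      have ez : @zz R d l L L' w m (al i) = @zz R d l L L' w m' (al i').
        move: z0 z0' ef; rewrite /f /=.
        by case: (@zz R d l L L' w m (al i)) => n //; case: (@zz R d l L L' w m' (al i')) => n' //= _ _ ->.
      have [em ek] := @exc_inj R d l L L' w tau L0 tauE m m' (al i) (al i') (hsq i) (hsq i') b1 b1' ez.
      have em' : m = m' by apply: val_inj.
      subst m'.
      have ess : @ss R d l L L' w m (al i) = @ss R d l L L' w m (al i') by rewrite /ss ek.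
      have [_ [_ [_ [_ [_ [st tm]]]]]] := @exc_props R d l L L' w tau tauE m (al i) (hsq i) b1.
      have [_ [_ [_ [_ [_ [st' tm']]]]]] := @exc_props R d l L L' w tau tauE m (al i') (hsq i') b1'.
      move: s1 s1'; rewrite -!leNgt => s1 s1'.
      have ei : i = i'.
        apply: val_inj => /=; case: (ltngtP i i') => // hii.
        + have hh1 : (hsq i.+1 <= hsq i')%N := hs_mono alpha Q i.+1 i' hii.
          have : (hsq i.+1)%:R <= (hsq i')%:R :> R by rewrite ler_nat.
          move=> hh2; exfalso; lra.
        + have hh1 : (hsq i'.+1 <= hsq i)%N := hs_mono alpha Q i'.+1 i hii.
          have : (hsq i'.+1)%:R <= (hsq i)%:R :> R by rewrite ler_nat.
          move=> hh2; exfalso; lra.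
      by rewrite ei.
    - move=> [i m]; rewrite /Aset unfold_in /= => /andP [/negP b1 _].
      have [z0 _ zs _] := @zz_props R d l L L' w tau tauE m (al i) (hsq i) b1.
      have [_ [_ [_ [_ [_ [st _]]]]]] := @exc_props R d l L L' w tau tauE m (al i) (hsq i) b1.
      have : tau (m + al i)%N <= t.
        apply: le_trans tauN; apply: taumono; exact: (@ar4 m M (al i) A N (ltn_ord m) (alA i) NMA).
      move=> tt; rewrite ltnS truncn_ge_nat; last exact: ltW.
      move: z0 zs; rewrite /f /=; case: (@zz R d l L L' w m (al i)) => n // _ zs.
      rewrite -pmulrn in zs; rewrite /=; lra.
  rewrite Eq; apply: (@le_trans _ _ ((Num.trunc t).+1)%:R); first by rewrite ler_nat.
  have h : (Num.trunc t)%:R <= t by rewrite truncn_le ltW.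
  by rewrite -addn1 natrD; lra.
have : \sum_(i < K) (X%:R / 2 - A%:R / 6) <= t + 1.
  by apply: le_trans Hcard; apply: ler_sum => i _; exact: perI.
rewrite sumr_const card_ord => HK.
have {}HK : K%:R * (X%:R / 2 - A%:R / 6) <= t + 1 by rewrite mulr_natl.
have XAr : 3 * A%:R + 2 <= X%:R :> R.
  by have := XA; rewrite -(ler_nat R) natrD natrM.
have A0 : 0 <= A%:R :> R := ler0n R A.
have h1 : c * (K%:R * (X%:R / 2 - A%:R / 6)) <= c * (t + 1).
  by rewrite ler_pM2l.
have W0 : 0 <= X%:R / 2 - A%:R / 6 :> R by lra.
have h2 : (4 * L + c) * (X%:R / 2 - A%:R / 6) <= c * K%:R * (X%:R / 2 - A%:R / 6).
  by apply: ler_wpM2r => //; exact: ltW.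
have h3 : L * (3 * A%:R + 2) <= L * X%:R by rewrite ler_pM2l.
have h4 : c * (3 * A%:R + 2) <= c * X%:R by rewrite ler_pM2l.
have {}hN2 : c * t < (X%:R + A%:R) * L by rewrite -NX.
nra.
Qed.
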